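(* Let $d\ge2$, $N\in\mathbb N$ and $\theta>0$. The $d$-types Moran model $\{k(t)\}_{t\ge0}$ with population size $N$ and symmetric parent-independent mutation at rate $\theta$ is self-dual with duality function $\bar D_N(k,\xi)=\prod_{i=1}^d\frac{k_i!}{(k_i-\xi_i)!}\frac{\Gamma(\frac{2\theta}{d-1})}{\Gamma(\xi_i+\frac{2\theta}{d-1})}$, where $k_d=N-\sum_{i=1}^{d-1}k_i$ and $\xi_d=N-\sum_{i=1}^{d-1}\xi_i$; that is, for all $k,\xi$ in the state space and all $t>0$, $\mathbb E_k\bar D_N(k(t),\xi)=\mathbb E_\xi\bar D_N(k,\xi(t))$, where $\{\xi(t)\}$ is a copy of the same Moran model.
   Context: $\mathbb N_0=\{0,1,2,\dots\}$, $e_i$ the $i$-th unit vector; $\frac{k!}{(k-\xi)!}$ is interpreted as $0$ when $\xi>k$. The state space is $\{k\in\mathbb N_0^{d-1}:\sum_jk_j\le N\}$ and the generator is $\mathscr L^{Mor}_{N,d,\theta}g(k)=\frac12\sum_{1\le i<j\le d-1}\big[k_i(k_j+\frac{2\theta}{d-1})(g(k-e_i+e_j)-g(k))+k_j(k_i+\frac{2\theta}{d-1})(g(k+e_i-e_j)-g(k))\big]+\frac12\sum_{i=1}^{d-1}\big[(N-\sum_{j=1}^{d-1}k_j)(k_i+\frac{2\theta}{d-1})(g(k+e_i)-g(k))+k_i(N-\sum_{j=1}^{d-1}k_j+\frac{2\theta}{d-1})(g(k-e_i)-g(k))\big]$. $\mathbb E_k$ denotes expectation for the process started at $k$. *)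

(* Defs.v *)
From HB Require Import structures.
From mathcomp Require Import all_boot all_order all_algebra.
From mathcomp Require Import all_classical all_reals all_analysis.
Unset Printing Implicit Defensive.
Import Order.TTheory GRing.Theory Num.Theory.
Import numFieldNormedType.Exports.
Local Open Scope ring_scope.

(* States: k = (k_1,...,k_{d-1}) encoded as functions 'I_m -> nat with m = d-1. *)
Definition state (m : nat) := 'I_m -> nat.

Definition tot {m : nat} (k : state m) : nat := (\sum_(j < m) k j)%N.

Definition in_space {m : nat} (N : nat) (k : state m) : Prop := (tot k <= N)%N.

Definition mv {m : nat} (k : state m) (i j : 'I_m) : state m :=
  fun l => if l == i then (k l).-1 else if l == j then (k l).+1 else k l.
Definition up {m : nat} (k : state m) (i : 'I_m) : state m :=
  fun l => if l == i then (k l).+1 else k l.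
Definition dn {m : nat} (k : state m) (i : 'I_m) : state m :=
  fun l => if l == i then (k l).-1 else k l.

Definition mutc {R : realType} (d : nat) (theta : R) : R := 2 * theta / (d.-1)%:R.

Definition Lmor {R : realType} (N d : nat) (theta : R)
    (g : state d.-1 -> R) (k : state d.-1) : R :=
  let c := mutc d theta in
  let r := (N - tot k)%N in
  2^-1 * (\sum_(i < d.-1) \sum_(j < d.-1 | (i < j)%N)
      ((k i)%:R * ((k j)%:R + c) * (g (mv k i j) - g k)
       + (k j)%:R * ((k i)%:R + c) * (g (mv k j i) - g k)))
  + 2^-1 * (\sum_(i < d.-1)
      (r%:R * ((k i)%:R + c) * (g (up k i) - g k)
       + (k i)%:R * (r%:R + c) * (g (dn k i) - g k))).

(* Transition semigroup of the (finite-state) chain: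
   E_k[g(k(t))] = (exp(t L) g)(k) = sum_{n>=0} t^n/n! (L^n g)(k). *)
Definition Emor {R : realType} (N d : nat) (theta t : R)
    (g : state d.-1 -> R) (k : state d.-1) : R :=
  limn (series (fun n : nat => t ^+ n / (n`!)%:R * iter n (Lmor N d theta) g k)).

(* k!/(k-xi)! (falling factorial, 0 if xi > k) times Gamma(c)/Gamma(xi+c),
   the latter written as 1 / (c)_xi with the rising factorial
   (c)_xi = c (c+1) ... (c+xi-1). *)
Definition Dterm {R : realType} (c : R) (a b : nat) : R :=
  (a ^_ b)%:R / \prod_(l < b) (c + l%:R).

Definition Dbar {R : realType} (N d : nat) (theta : R)
    (k xi : state d.-1) : R :=
  let c := mutc d theta in
  (\prod_(i < d.-1) Dterm c (k i) (xi i)) * Dterm c (N - tot k)%N (N - tot xi)%N.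

(* Main.v *)
Require Import Defs.
From HB Require Import structures.
From mathcomp Require Import all_boot all_order all_algebra.
From mathcomp Require Import all_classical all_reals all_analysis.
From mathcomp Require Import ring lra zify.
Import Order.TTheory GRing.Theory Num.Theory.
Local Open Scope ring_scope.
Set Implicit Arguments. Unset Strict Implicit.


Lemma P_gt0 (R : realType) (c : R) x : 0 < c -> 0 < \prod_(l < x) (c + l%:R).
Proof. move=> hc; apply: prodr_gt0 => i _; by rewrite (lt_le_trans hc) // lerDl ler0n. Qed.

Lemma cx_neq0 (R : realType) (c : R) (x : nat) : 0 < c -> c + x%:R != 0.
Proof. move=> hc; rewrite gt_eqF //; by rewrite (lt_le_trans hc) // lerDl ler0n. Qed.

Lemma ffR (R : realType) a x : ((a ^_ x.+1)%:R : R) = (a ^_ x)%:R * (a%:R - x%:R).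
Proof.
rewrite ffactnSr natrM; case: (leqP x a) => h; first by rewrite natrB.
by rewrite ffact_small // !mul0r.
Qed.

Lemma D0 (R : realType) (c : R) a : Dterm c a 0 = 1.
Proof. by rewrite /Dterm ffactn0 big_ord0 divr1. Qed.

Lemma DS (R : realType) (c : R) a x : 0 < c ->
  Dterm c a x.+1 = Dterm c a x * (a%:R - x%:R) / (c + x%:R).
Proof.
move=> hc; rewrite /Dterm ffR big_ord_recr /=.
have := P_gt0 x hc; have := cx_neq0 x hc => h1 h2.
field; apply/andP; split => //; exact: lt0r_neq0.
Qed.

Lemma DSa (R : realType) (c : R) a x : 0 < c ->
  Dterm c a.+1 x.+1 = a.+1%:R * Dterm c a x / (c + x%:R).
Proof.
move=> hc; rewrite /Dterm ffactSS natrM big_ord_recr /=.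
have := P_gt0 x hc; have := cx_neq0 x hc => h1 h2.
field; apply/andP; split => //; exact: lt0r_neq0.
Qed.

Lemma Dpred (R : realType) (c : R) a x : 0 < c ->
  a%:R * Dterm c a.-1 x = Dterm c a x * (a%:R - x%:R).
Proof.
move=> hc; rewrite /Dterm mulrA -natrM -ffactnS ffR.
have := P_gt0 x hc => h2.
field; exact: lt0r_neq0.
Qed.

Lemma cr_neq0 (R : realType) (c r : R) : 0 < c -> 0 <= r -> c + r != 0.
Proof. by move=> hc hr; rewrite gt_eqF // (lt_le_trans hc) // lerDl. Qed.

Ltac side hc := repeat (apply/andP; split);
  first [exact: (lt0r_neq0 hc) | apply: (cr_neq0 hc); by rewrite ?addr_ge0 ?ler01 ?ler0n].

Definition EdgeK (R : realType) (c : R) (a b x y : nat) : R :=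
  a%:R * (b%:R + c) * (Dterm c a.-1 x * Dterm c b.+1 y - Dterm c a x * Dterm c b y)
  + b%:R * (a%:R + c) * (Dterm c a.+1 x * Dterm c b.-1 y - Dterm c a x * Dterm c b y).
Definition EdgeX (R : realType) (c : R) (a b x y : nat) : R :=
  x%:R * (y%:R + c) * (Dterm c a x.-1 * Dterm c b y.+1 - Dterm c a x * Dterm c b y)
  + y%:R * (x%:R + c) * (Dterm c a x.+1 * Dterm c b y.-1 - Dterm c a x * Dterm c b y).

Lemma edge (R : realType) (c : R) a b x y : 0 < c -> EdgeK c a b x y = EdgeX c a b x y.
Proof.
move=> hc.
have -> : EdgeK c a b x y = (b%:R + c) * Dterm c b.+1 y * (a%:R * Dterm c a.-1 x)
   - a%:R*(b%:R+c)*(Dterm c a x * Dterm c b y)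
   + (a%:R + c) * Dterm c a.+1 x * (b%:R * Dterm c b.-1 y)
   - b%:R*(a%:R+c)*(Dterm c a x*Dterm c b y) by rewrite /EdgeK; ring.
rewrite !Dpred // /EdgeX.
case: x => [|x]; case: y => [|y] /=; rewrite ?DSa // !DS // ?D0; field; side hc.
Qed.



Lemma tot_up m (k : state m) i : tot (up k i) = (tot k).+1.
Proof.
rewrite /tot (bigD1 i) //= [in RHS](bigD1 i) //= /up eqxx addSn; congr (_.+1 + _)%N.
by apply: eq_bigr => l /negbTE ->.
Qed.

Lemma tot_dn m (k : state m) i : (0 < k i)%N -> (tot (dn k i)).+1 = tot k.
Proof.
move=> hk; rewrite /tot (bigD1 i) //= [in RHS](bigD1 i) //= /dn eqxx -addSn prednK //.
congr (_ + _)%N; by apply: eq_bigr => l /negbTE ->.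
Qed.

Lemma mv_updn m (k : state m) i j : i != j -> mv k i j = up (dn k i) j.
Proof.
move=> hij; apply: funext => l; rewrite /mv /up /dn.
case: (eqVneq l i) => [->|hli]; first by rewrite (negbTE hij).
by case: (eqVneq l j).
Qed.

Lemma tot_mv m (k : state m) i j : i != j -> (0 < k i)%N -> tot (mv k i j) = tot k.
Proof. by move=> hij hk; rewrite mv_updn // tot_up tot_dn. Qed.

Lemma prod1 (R : realType) m (f : 'I_m -> R) i :
  \prod_l f l = f i * \prod_(l | l != i) f l.
Proof. by rewrite (bigD1 i). Qed.

Lemma prod2 (R : realType) m (f : 'I_m -> R) i j : i != j ->
  \prod_l f l = f i * f j * \prod_(l | (l != i) && (l != j)) f l.
Proof. by move=> hij; rewrite (bigD1 i) //= (bigD1 j) /= 1?eq_sym // mulrA. Qed.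


Lemma Dmv_k (R : realType) N d (theta : R) (k xi : state d.-1) i j : i != j ->
  (k i)%:R * Dbar N d theta (mv k i j) xi =
  (k i)%:R * (Dterm (mutc d theta) (k i).-1 (xi i) * Dterm (mutc d theta) (k j).+1 (xi j) *
   (\prod_(l | (l != i) && (l != j)) Dterm (mutc d theta) (k l) (xi l)
    * Dterm (mutc d theta) (N - tot k) (N - tot xi))).
Proof.
move=> hij; case: (posnP (k i)) => [->|hk]; first by rewrite !mul0r.
rewrite /Dbar tot_mv // (prod2 _ hij) /mv eqxx eq_sym (negbTE hij) eqxx.
congr (_ * _); rewrite !mulrA; congr (_ * _ * _ * _).
by apply: eq_bigr => l /andP[h1 h2]; rewrite (negbTE h1) (negbTE h2).
Qed.

Lemma Dmv_x (R : realType) N d (theta : R) (k xi : state d.-1) i j : i != j ->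
  (xi i)%:R * Dbar N d theta k (mv xi i j) =
  (xi i)%:R * (Dterm (mutc d theta) (k i) (xi i).-1 * Dterm (mutc d theta) (k j) (xi j).+1 *
   (\prod_(l | (l != i) && (l != j)) Dterm (mutc d theta) (k l) (xi l)
    * Dterm (mutc d theta) (N - tot k) (N - tot xi))).
Proof.
move=> hij; case: (posnP (xi i)) => [->|hk]; first by rewrite !mul0r.
rewrite /Dbar tot_mv // (prod2 _ hij) /mv eqxx eq_sym (negbTE hij) eqxx.
congr (_ * _); rewrite !mulrA; congr (_ * _ * _ * _).
by apply: eq_bigr => l /andP[h1 h2]; rewrite (negbTE h1) (negbTE h2).
Qed.

Lemma D_split2 (R : realType) N d (theta : R) (k xi : state d.-1) i j : i != j ->
  Dbar N d theta k xi =
  Dterm (mutc d theta) (k i) (xi i) * Dterm (mutc d theta) (k j) (xi j) *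
   (\prod_(l | (l != i) && (l != j)) Dterm (mutc d theta) (k l) (xi l)
    * Dterm (mutc d theta) (N - tot k) (N - tot xi)).
Proof. by move=> hij; rewrite /Dbar (prod2 _ hij) !mulrA. Qed.

Lemma swap_rest (R : realType) m (f : 'I_m -> R) i j :
  \prod_(l | (l != j) && (l != i)) f l = \prod_(l | (l != i) && (l != j)) f l.
Proof. by apply: eq_bigl => l; rewrite andbC. Qed.

Lemma ecase (R : realType) (a z X X' W : R) : a * X = a * X' -> a * z * (X - W) = z * (a * X') - a * z * W.
Proof. move=> h; rewrite -h; ring. Qed.

Lemma pairK (R : realType) N d (theta : R) (k xi : state d.-1) i j : i != j ->
  (k i)%:R * ((k j)%:R + mutc d theta) * (Dbar N d theta (mv k i j) xi - Dbar N d theta k xi)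
  + (k j)%:R * ((k i)%:R + mutc d theta) * (Dbar N d theta (mv k j i) xi - Dbar N d theta k xi)
  = (\prod_(l | (l != i) && (l != j)) Dterm (mutc d theta) (k l) (xi l)
    * Dterm (mutc d theta) (N - tot k) (N - tot xi)) * EdgeK (mutc d theta) (k i) (k j) (xi i) (xi j).
Proof.
move=> hij; have hji : j != i by rewrite eq_sym.
rewrite (ecase _ _ (Dmv_k N theta k xi hij)) (ecase _ _ (Dmv_k N theta k xi hji)) (@swap_rest _ _ _ i j).
rewrite (D_split2 N theta k xi hij) /EdgeK; ring.
Qed.

Lemma pairX (R : realType) N d (theta : R) (k xi : state d.-1) i j : i != j ->
  (xi i)%:R * ((xi j)%:R + mutc d theta) * (Dbar N d theta k (mv xi i j) - Dbar N d theta k xi)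
  + (xi j)%:R * ((xi i)%:R + mutc d theta) * (Dbar N d theta k (mv xi j i) - Dbar N d theta k xi)
  = (\prod_(l | (l != i) && (l != j)) Dterm (mutc d theta) (k l) (xi l)
    * Dterm (mutc d theta) (N - tot k) (N - tot xi)) * EdgeX (mutc d theta) (k i) (k j) (xi i) (xi j).
Proof.
move=> hij; have hji : j != i by rewrite eq_sym.
rewrite (ecase _ _ (Dmv_x N theta k xi hij)) (ecase _ _ (Dmv_x N theta k xi hji)) (@swap_rest _ _ _ i j).
rewrite (D_split2 N theta k xi hij) /EdgeX; ring.
Qed.

Lemma D_split1 (R : realType) N d (theta : R) (k xi : state d.-1) i :
  Dbar N d theta k xi =
  Dterm (mutc d theta) (k i) (xi i) * Dterm (mutc d theta) (N - tot k) (N - tot xi) *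
   \prod_(l | l != i) Dterm (mutc d theta) (k l) (xi l).
Proof. by rewrite /Dbar (prod1 _ i); ring. Qed.

Lemma Dup_k (R : realType) N d (theta : R) (k xi : state d.-1) i :
  Dbar N d theta (up k i) xi =
  Dterm (mutc d theta) (k i).+1 (xi i) * Dterm (mutc d theta) (N - tot k).-1 (N - tot xi) *
   \prod_(l | l != i) Dterm (mutc d theta) (k l) (xi l).
Proof.
rewrite (D_split1 _ _ _ _ i) tot_up subnS /up eqxx.
by congr (_ * _); apply: eq_bigr => l /negbTE ->.
Qed.

Lemma Dup_x (R : realType) N d (theta : R) (k xi : state d.-1) i :
  Dbar N d theta k (up xi i) =
  Dterm (mutc d theta) (k i) (xi i).+1 * Dterm (mutc d theta) (N - tot k) (N - tot xi).-1 *
   \prod_(l | l != i) Dterm (mutc d theta) (k l) (xi l).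
Proof.
rewrite (D_split1 _ _ _ _ i) tot_up subnS /up eqxx.
by congr (_ * _); apply: eq_bigr => l /negbTE ->.
Qed.

Lemma Ddn_k (R : realType) N d (theta : R) (k xi : state d.-1) i : in_space N k ->
  (k i)%:R * Dbar N d theta (dn k i) xi =
  (k i)%:R * (Dterm (mutc d theta) (k i).-1 (xi i) * Dterm (mutc d theta) (N - tot k).+1 (N - tot xi) *
   \prod_(l | l != i) Dterm (mutc d theta) (k l) (xi l)).
Proof.
move=> hk; case: (posnP (k i)) => [->|hki]; first by rewrite !mul0r.
have ht := tot_dn hki.
rewrite (D_split1 _ _ _ _ i).
have -> : (N - tot (dn k i) = (N - tot k).+1)%N by rewrite /in_space in hk; lia.
rewrite /dn eqxx.
by congr (_ * (_ * _)); apply: eq_bigr => l /negbTE ->.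
Qed.

Lemma Ddn_x (R : realType) N d (theta : R) (k xi : state d.-1) i : in_space N xi ->
  (xi i)%:R * Dbar N d theta k (dn xi i) =
  (xi i)%:R * (Dterm (mutc d theta) (k i) (xi i).-1 * Dterm (mutc d theta) (N - tot k) (N - tot xi).+1 *
   \prod_(l | l != i) Dterm (mutc d theta) (k l) (xi l)).
Proof.
move=> hk; case: (posnP (xi i)) => [->|hki]; first by rewrite !mul0r.
have ht := tot_dn hki.
rewrite (D_split1 _ _ _ _ i).
have -> : (N - tot (dn xi i) = (N - tot xi).+1)%N by rewrite /in_space in hk; lia.
rewrite /dn eqxx.
by congr (_ * (_ * _)); apply: eq_bigr => l /negbTE ->.
Qed.

Lemma updnK (R : realType) N d (theta : R) (k xi : state d.-1) i : in_space N k ->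
  (N - tot k)%:R * ((k i)%:R + mutc d theta) * (Dbar N d theta (up k i) xi - Dbar N d theta k xi)
  + (k i)%:R * ((N - tot k)%:R + mutc d theta) * (Dbar N d theta (dn k i) xi - Dbar N d theta k xi)
  = \prod_(l | l != i) Dterm (mutc d theta) (k l) (xi l)
    * EdgeK (mutc d theta) (k i) (N - tot k) (xi i) (N - tot xi).
Proof.
move=> hk; rewrite (ecase _ _ (Ddn_k theta xi i hk)) Dup_k (D_split1 N theta k xi i) /EdgeK; ring.
Qed.

Lemma updnX (R : realType) N d (theta : R) (k xi : state d.-1) i : in_space N xi ->
  (N - tot xi)%:R * ((xi i)%:R + mutc d theta) * (Dbar N d theta k (up xi i) - Dbar N d theta k xi)
  + (xi i)%:R * ((N - tot xi)%:R + mutc d theta) * (Dbar N d theta k (dn xi i) - Dbar N d theta k xi)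
  = \prod_(l | l != i) Dterm (mutc d theta) (k l) (xi l)
    * EdgeX (mutc d theta) (k i) (N - tot k) (xi i) (N - tot xi).
Proof.
move=> hk; rewrite (ecase _ _ (Ddn_x theta k i hk)) Dup_x (D_split1 N theta k xi i) /EdgeX; ring.
Qed.



Lemma LmorE (R : realType) N d (theta : R) g k : Lmor N d theta g k =
  2^-1 * (\sum_(i < d.-1) \sum_(j < d.-1 | (i < j)%N)
      ((k i)%:R * ((k j)%:R + mutc d theta) * (g (mv k i j) - g k)
       + (k j)%:R * ((k i)%:R + mutc d theta) * (g (mv k j i) - g k)))
  + 2^-1 * (\sum_(i < d.-1)
      ((N - tot k)%:R * ((k i)%:R + mutc d theta) * (g (up k i) - g k)
       + (k i)%:R * ((N - tot k)%:R + mutc d theta) * (g (dn k i) - g k))).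
Proof. by []. Qed.

Lemma dualpt (R : realType) N d (theta : R) (k xi : state d.-1) :
  0 < mutc d theta -> in_space N k -> in_space N xi ->
  Lmor N d theta (fun k' => Dbar N d theta k' xi) k
  = Lmor N d theta (fun xi' => Dbar N d theta k xi') xi.
Proof.
move=> hc hk hx; rewrite !LmorE.
congr (_ * _ + _ * _).
  apply: eq_bigr => i _; apply: eq_bigr => j hij.
  have hij' : i != j by rewrite neq_ltn hij.
  by rewrite pairK // pairX // edge.
apply: eq_bigr => i _.
by rewrite updnK // updnX // edge.
Qed.

Lemma eq_Lmor (R : realType) N d (theta : R) (g h : state d.-1 -> R) k :
  (forall x, g x = h x) -> Lmor N d theta g k = Lmor N d theta h k.
Proof. by move=> e; rewrite (funext e). Qed.

Lemma lin_aux (R : realType) (x y x1 y1 x2 y2 a b : R) :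
  x = a * x1 + b * x2 -> y = a * y1 + b * y2 ->
  2^-1 * x + 2^-1 * y = a * (2^-1 * x1 + 2^-1 * y1) + b * (2^-1 * x2 + 2^-1 * y2).
Proof. by move=> -> ->; ring. Qed.

Lemma Lmor_lin (R : realType) N d (theta : R) (a b : R) g h k :
  Lmor N d theta (fun x => a * g x + b * h x) k
  = a * Lmor N d theta g k + b * Lmor N d theta h k.
Proof.
rewrite !LmorE; apply: lin_aux.
  rewrite !mulr_sumr -big_split; apply: eq_bigr => i _.
  rewrite !mulr_sumr -big_split; apply: eq_bigr => j _ => /=; ring.
rewrite !mulr_sumr -big_split; apply: eq_bigr => i _ /=; ring.
Qed.

Lemma Lmor_add (R : realType) N d (theta : R) g h k :
  Lmor N d theta (fun x => g x + h x) k = Lmor N d theta g k + Lmor N d theta h k.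
Proof.
have := Lmor_lin N theta 1 1 g h k; rewrite !mul1r => <-.
by apply: eq_Lmor => x; rewrite !mul1r.
Qed.

Lemma Lmor_sub (R : realType) N d (theta : R) g h k :
  Lmor N d theta (fun x => g x - h x) k = Lmor N d theta g k - Lmor N d theta h k.
Proof.
have := Lmor_lin N theta 1 (-1) g h k; rewrite mul1r mulN1r => <-.
by apply: eq_Lmor => x; rewrite mul1r mulN1r.
Qed.

Lemma Lmor_scal (R : realType) N d (theta : R) a g k :
  Lmor N d theta (fun x => a * g x) k = a * Lmor N d theta g k.
Proof.
have := Lmor_lin N theta a 0 g g k; rewrite mul0r addr0 => <-.
by apply: eq_Lmor => x; rewrite mul0r addr0.
Qed.

Lemma Lmor0 (R : realType) N d (theta : R) k :
  Lmor N d theta (fun _ => 0) k = 0.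
Proof.
transitivity (0 * Lmor N d theta (fun _ : state d.-1 => 0) k); last by rewrite mul0r.
by rewrite -Lmor_scal; apply: eq_Lmor => x; rewrite mul0r.
Qed.

Lemma Lmor_sum (R : realType) N d (theta : R) (I : Type) (r : seq I) (P : pred I)
   (G : I -> state d.-1 -> R) k :
  Lmor N d theta (fun x => \sum_(i <- r | P i) G i x) k
  = \sum_(i <- r | P i) Lmor N d theta (G i) k.
Proof.
elim: r => [|s r IH].
  rewrite big_nil -[RHS](Lmor0 N theta k); apply: eq_Lmor => x; by rewrite big_nil.
rewrite big_cons.
under eq_Lmor => x do rewrite big_cons.
case: (P s); last exact: IH.
by rewrite Lmor_add IH.
Qed.

Lemma Lmor_comm (R : realType) N d (theta : R) (G : state d.-1 -> state d.-1 -> R) k xi :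
  Lmor N d theta (fun x => Lmor N d theta (G x) xi) k
  = Lmor N d theta (fun y => Lmor N d theta (fun x => G x y) k) xi.
Proof.
under eq_Lmor => x do rewrite LmorE.
rewrite Lmor_add !Lmor_scal !Lmor_sum.
under eq_bigr => i _ do rewrite Lmor_sum.
under eq_bigr => i _ do under eq_bigr => j _ do rewrite Lmor_add !Lmor_scal !Lmor_sub.
under [X in _ + _ * X]eq_bigr => i _ do rewrite Lmor_add !Lmor_scal !Lmor_sub.
by rewrite [RHS]LmorE.
Qed.



Lemma zc (R : realType) (a : nat) (z X Y W W' : R) :
  ((0 < a)%N -> X = Y) -> W = W' -> a%:R * z * (X - W) = a%:R * z * (Y - W').
Proof. by case: (posnP a) => [->|h] e ->; rewrite ?mul0r // e. Qed.

Lemma Lmor_local (R : realType) N d (theta : R) (g h : state d.-1 -> R) k :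
  in_space N k -> (forall k', in_space N k' -> g k' = h k') ->
  Lmor N d theta g k = Lmor N d theta h k.
Proof.
move=> hk e; rewrite !LmorE; have ek := e k hk.
congr (_ * _ + _ * _).
  apply: eq_bigr => i _; apply: eq_bigr => j hij.
  have hij' : i != j by rewrite neq_ltn hij.
  have hji' : j != i by rewrite eq_sym.
  congr (_ + _); apply: zc => // hpos; apply: e; by rewrite /in_space tot_mv.
apply: eq_bigr => i _; congr (_ + _); apply: zc => // hpos; apply: e.
  by rewrite /in_space tot_up; rewrite /in_space in hk; lia.
have := tot_dn hpos; rewrite /in_space in hk *; lia.
Qed.

Definition Ak (R : realType) N d (theta : R) (F : state d.-1 -> state d.-1 -> R) :=
  fun k xi => Lmor N d theta (fun k' => F k' xi) k.
Definition Bx (R : realType) N d (theta : R) (F : state d.-1 -> state d.-1 -> R) :=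
  fun k xi => Lmor N d theta (F k) xi.

Definition Sp (R : realType) N d (F G : state d.-1 -> state d.-1 -> R) :=
  forall k xi, in_space N k -> in_space N xi -> F k xi = G k xi.

Arguments Sp {R} N d F G.
Arguments Ak {R} N d theta F _ _.
Arguments Bx {R} N d theta F _ _.

Lemma Ak_loc (R : realType) N d (theta : R) F G :
  Sp N d F G -> Sp N d (Ak N d theta F) (Ak N d theta G).
Proof. move=> e k xi hk hx; apply: Lmor_local => // k' hk'; exact: e. Qed.

Lemma Bx_loc (R : realType) N d (theta : R) F G :
  Sp N d F G -> Sp N d (Bx N d theta F) (Bx N d theta G).
Proof. move=> e k xi hk hx; apply: Lmor_local => // k' hk'; exact: e. Qed.

Lemma iterAk_loc (R : realType) N d (theta : R) n F G :
  Sp N d F G -> Sp N d (iter n (Ak N d theta) F) (iter n (Ak N d theta) G).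
Proof. move=> e; elim: n => [|n IH] //=; exact: Ak_loc. Qed.

Lemma AkBx (R : realType) N d (theta : R) F :
  Ak N d theta (Bx N d theta F) = Bx N d theta (Ak N d theta F).
Proof. apply: funext => k; apply: funext => xi; exact: Lmor_comm. Qed.

Lemma iterAkBx (R : realType) N d (theta : R) n F :
  iter n (Ak N d theta) (Bx N d theta F) = Bx N d theta (iter n (Ak N d theta) F).
Proof. elim: n => [|n IH] //=; by rewrite IH AkBx. Qed.

Lemma iterA (R : realType) N d (theta : R) n (F : state d.-1 -> state d.-1 -> R) xi :
  iter n (Lmor N d theta) (fun k' => F k' xi) = fun k => iter n (Ak N d theta) F k xi.
Proof. elim: n => [|n IH] //=; by rewrite IH. Qed.

Lemma iterB (R : realType) N d (theta : R) n (F : state d.-1 -> state d.-1 -> R) k :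
  iter n (Lmor N d theta) (F k) = fun xi => iter n (Bx N d theta) F k xi.
Proof. elim: n => [|n IH] //=; by rewrite IH. Qed.

Lemma main_iter (R : realType) N d (theta : R) n :
  0 < mutc d theta ->
  Sp N d (iter n (Ak N d theta) (Dbar N d theta)) (iter n (Bx N d theta) (Dbar N d theta)).
Proof.
move=> hc; elim: n => [|n IH] k xi hk hx; first by [].
have -> : iter n.+1 (Ak N d theta) (Dbar N d theta)
  = iter n (Ak N d theta) (Ak N d theta (Dbar N d theta)) by rewrite iterSr.
have -> : iter n.+1 (Bx N d theta) (Dbar N d theta)
  = Bx N d theta (iter n (Bx N d theta) (Dbar N d theta)) by rewrite iterS.
have h1 : Sp N d (iter n (Ak N d theta) (Ak N d theta (Dbar N d theta)))
               (iter n (Ak N d theta) (Bx N d theta (Dbar N d theta))).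
  apply: iterAk_loc => k' xi' hk' hx'; exact: dualpt.
rewrite h1 // iterAkBx.
by apply: (@Bx_loc _ N d theta _ _ IH).
Qed.

Unset Implicit Arguments. Set Strict Implicit.
Theorem theorem5p2 (R : realType) (d N : nat) (theta : R) :
  (2 <= d)%N -> 0 < theta ->
  forall k xi : state d.-1, in_space N k -> in_space N xi ->
  forall t : R, 0 < t ->
    Emor N d theta t (fun k' => Dbar N d theta k' xi) k
    = Emor N d theta t (fun xi' => Dbar N d theta k xi') xi.
Proof.
move=> hd hth k xi hk hx t ht.
have hc : 0 < mutc d theta.
  rewrite /mutc divr_gt0 ?mulr_gt0 ?ltr0n //; lia.
rewrite /Emor; congr (limn (series _)); apply: funext => n.
rewrite (@iterA R N d theta n (Dbar N d theta) xi).
have -> : (fun xi' => Dbar N d theta k xi') = Dbar N d theta k by [].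
rewrite (@iterB R N d theta n (Dbar N d theta) k).
by rewrite main_iter.
Qed.
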